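(* Let $S$ be a quasi-adequate semigroup with an admissible adequate transversal $S^0$. Then for all $x,y\in S$, $\overline{xy}=\overline{\overline{x}f_xe_y\overline{y}}$.
   Context: For a semigroup $S$, $S^1$ is $S$ with an identity adjoined, $\mathcal{L},\mathcal{R}$ Green's relations. $\mathcal{R}^\ast=\{(a,b):\forall x,y\in S^1,\ xa=ya\iff xb=yb\}$, $\mathcal{L}^\ast=\{(a,b):\forall x,y\in S^1,\ ax=ay\iff bx=by\}$. $S$ is abundant if each $\mathcal{R}^\ast$- and $\mathcal{L}^\ast$-class contains an idempotent; adequate if also idempotents commute (then $a^+$, $a^\ast$ are the unique idempotents $\mathcal{R}^\ast$-, resp. $\mathcal{L}^\ast$-related to $a$). Quasi-adequate: abundant with idempotents forming a subsemigroup. An abundant subsemigroup $U$ of abundant $S$ is a $\ast$-subsemigroup if $\mathcal{L}^\ast(U)=\mathcal{L}^\ast(S)\cap(U\times U)$, $\mathcal{R}^\ast(U)=\mathcal{R}^\ast(S)\cap(U\times U)$. An adequate $\ast$-subsemigroup $S^0$ of abundant $S$ is an adequate transversal if each $x\in S$ has a unique $\overline{x}\in S^0$ and idempotents $e,f$ of $S$ (then unique, written $e_x,f_x$) with $x=e\overline{x}f$, $e\,\mathcal{L}\,\overline{x}^+$, $f\,\mathcal{R}\,\overline{x}^\ast$. It is admissible if $\overline{xy}=\overline{x}\,\overline{y}$ for all $x,y\in S$. *)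

(* Defs.v *)
Set Implicit Arguments.
Unset Strict Implicit.

Section Semigroup.
Variables (S : Type) (mul : S -> S -> S).

Definition associative_op : Prop := forall a b c, mul a (mul b c) = mul (mul a b) c.

Definition idem (e : S) : Prop := mul e e = e.

(* S^1 : elements of S with an adjoined identity (None). *)
Definition lmul1 (u : option S) (a : S) : S :=
  match u with None => a | Some z => mul z a end.
Definition rmul1 (a : S) (u : option S) : S :=
  match u with None => a | Some z => mul a z end.

Definition in1 (U : S -> Prop) (u : option S) : Prop :=
  match u with None => True | Some z => U z end.

Definition fullset : S -> Prop := fun _ => True.

Definition subsemigroup (U : S -> Prop) : Prop :=
  forall a b, U a -> U b -> U (mul a b).

Definition GreenL (a b : S) : Prop :=
  exists u v : option S, a = lmul1 u b /\ b = lmul1 v a.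
Definition GreenR (a b : S) : Prop :=
  exists u v : option S, a = rmul1 b u /\ b = rmul1 a v.

(* R^* and L^* computed inside the subsemigroup U (U = fullset gives S). *)
Definition Rstar_in (U : S -> Prop) (a b : S) : Prop :=
  forall x y, in1 U x -> in1 U y ->
    (lmul1 x a = lmul1 y a <-> lmul1 x b = lmul1 y b).
Definition Lstar_in (U : S -> Prop) (a b : S) : Prop :=
  forall x y, in1 U x -> in1 U y ->
    (rmul1 a x = rmul1 a y <-> rmul1 b x = rmul1 b y).

Definition abundant_in (U : S -> Prop) : Prop :=
  forall a, U a ->
    (exists e, U e /\ idem e /\ Rstar_in U a e) /\
    (exists e, U e /\ idem e /\ Lstar_in U a e).

Definition abundant : Prop := abundant_in fullset.

Definition quasi_adequate : Prop :=
  abundant /\ forall e f, idem e -> idem f -> idem (mul e f).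

Definition adequate_in (U : S -> Prop) : Prop :=
  abundant_in U /\
  forall e f, U e -> U f -> idem e -> idem f -> mul e f = mul f e.

Definition star_subsemigroup (U : S -> Prop) : Prop :=
  subsemigroup U /\ abundant_in U /\
  forall a b, U a -> U b ->
    (Lstar_in U a b <-> Lstar_in fullset a b) /\
    (Rstar_in U a b <-> Rstar_in fullset a b).

Definition is_plus (U : S -> Prop) (a p : S) : Prop :=
  U p /\ idem p /\ Rstar_in U a p.
Definition is_star (U : S -> Prop) (a p : S) : Prop :=
  U p /\ idem p /\ Lstar_in U a p.

Definition tdecomp (S0 : S -> Prop) (x xb e f : S) : Prop :=
  S0 xb /\ idem e /\ idem f /\ x = mul (mul e xb) f /\
  (exists p, is_plus S0 xb p /\ GreenL e p) /\
  (exists q, is_star S0 xb q /\ GreenR f q).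

Definition adequate_transversal (S0 : S -> Prop) : Prop :=
  abundant /\ adequate_in S0 /\ star_subsemigroup S0 /\
  forall x, exists xb, (exists e f, tdecomp S0 x xb e f) /\
    forall xb', (exists e f, tdecomp S0 x xb' e f) -> xb' = xb.

End Semigroup.

(* Main.v *)
Require Import Defs.
From Stdlib Require Import Setoid.

Theorem lemma2p12 (S : Type) (mul : S -> S -> S)
  (Hassoc : associative_op mul)
  (Hqa : quasi_adequate mul)
  (S0 : S -> Prop) (HS0 : adequate_transversal mul S0)
  (bar : S -> S)
  (Hbar : forall x, exists e f, tdecomp mul S0 x (bar x) e f)
  (Hadm : forall x y, bar (mul x y) = mul (bar x) (bar y)) :
  forall (x y ex fx ey fy : S),
    tdecomp mul S0 x (bar x) ex fx ->
    tdecomp mul S0 y (bar y) ey fy ->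
    bar (mul x y) = bar (mul (mul (mul (bar x) fx) ey) (bar y)).
Proof.
  destruct HS0 as [_ [[Hab0 Hcomm] [Hsub Huniq]]].
  assert (HS0bar : forall z, S0 (bar z)).
  { intro z. destruct (Hbar z) as [e [f [H _]]]. exact H. }
  assert (Hfix : forall z, S0 z -> bar z = z).
  { intros z Hz. destruct (Hab0 z Hz) as [[p [Hp [Hpi HpR]]] [q [Hq [Hqi HqL]]]].
    assert (Hpz : mul p z = z).
    { apply (proj2 (HpR (Some p) None Hp I)) ; simpl. exact Hpi. }
    assert (Hzq : mul z q = z).
    { apply (proj2 (HqL (Some q) None Hq I)) ; simpl. exact Hqi. }
    destruct (Huniq z) as [xb [Hex Hu]].
    assert (E1 : z = xb).
    { apply Hu. exists p, q. unfold tdecomp. repeat split; auto.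
      - rewrite Hpz, Hzq. reflexivity.
      - exists p. split. split; auto. exists None, None. simpl; auto.
      - exists q. split. split; auto. exists None, None. simpl; auto. }
    assert (E2 : bar z = xb).
    { apply Hu. apply Hbar. }
    congruence. }
  assert (Hidem : forall e, idem mul e -> idem mul (bar e)).
  { intros e He. unfold idem in *. rewrite <- Hadm, He. reflexivity. }
  assert (Hl : forall u a, bar (lmul1 mul u a) = lmul1 mul (option_map bar u) (bar a)).
  { intros [u|] a; simpl; auto. }
  assert (Hr : forall u a, bar (rmul1 mul a u) = rmul1 mul (bar a) (option_map bar u)).
  { intros [u|] a; simpl; auto. }
  assert (Hin : forall u, in1 S0 (option_map bar u)).
  { intros [u|]; simpl; auto. }
  assert (HL : forall e f u v, S0 e -> S0 f -> idem mul e -> idem mul f ->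
     in1 S0 u -> in1 S0 v -> e = lmul1 mul u f -> f = lmul1 mul v e -> e = f).
  { intros e f u v He Hf Hei Hfi Hu' Hv' E F.
    assert (ef : mul e f = e).
    { destruct u; simpl in E; rewrite E; [rewrite <- Hassoc, Hfi; reflexivity | exact Hfi]. }
    assert (fe : mul f e = f).
    { destruct v; simpl in F; rewrite F; [rewrite <- Hassoc, Hei; reflexivity | exact Hei]. }
    rewrite <- ef, Hcomm; auto. }
  assert (HR : forall e f u v, S0 e -> S0 f -> idem mul e -> idem mul f ->
     in1 S0 u -> in1 S0 v -> e = rmul1 mul f u -> f = rmul1 mul e v -> e = f).
  { intros e f u v He Hf Hei Hfi Hu' Hv' E F.
    assert (fe : mul f e = e).
    { destruct u; simpl in E; rewrite E; [rewrite Hassoc, Hfi; reflexivity | exact Hfi]. }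
    assert (ef : mul e f = f).
    { destruct v; simpl in F; rewrite F; [rewrite Hassoc, Hei; reflexivity | exact Hei]. }
    rewrite <- fe, <- Hcomm; auto. }
  intros x y ex fx ey fy [_ [Hexi [Hfxi [_ [_ [q [[Hq [Hqi HqL]] [u [v [E F]]]]]]]]]]
                        [_ [Heyi [Hfyi [_ [[p [[Hp [Hpi HpR]] [u' [v' [E' F']]]]] _]]]]].
  assert (Bfx : bar fx = q).
  { apply (HR _ _ (option_map bar u) (option_map bar v)); auto.
    - rewrite E at 1. rewrite Hr, Hfix; auto.
    - rewrite <- (Hfix q Hq) at 1. rewrite F at 1. rewrite Hr. reflexivity. }
  assert (Bey : bar ey = p).
  { apply (HL _ _ (option_map bar u') (option_map bar v')); auto.
    - rewrite E' at 1. rewrite Hl, Hfix; auto.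
    - rewrite <- (Hfix p Hp) at 1. rewrite F' at 1. rewrite Hl. reflexivity. }
  assert (Hxq : mul (bar x) q = bar x).
  { apply (proj2 (HqL (Some q) None Hq I)); simpl. exact Hqi. }
  assert (Hpy : mul p (bar y) = bar y).
  { apply (proj2 (HpR (Some p) None Hp I)); simpl. exact Hpi. }
  rewrite !Hadm, Bfx, Bey, (Hfix (bar x) (HS0bar x)), (Hfix (bar y) (HS0bar y)).
  rewrite Hxq, <- Hassoc, Hpy. reflexivity.
Qed.
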